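(* Let $k\geq 2$ be an integer and let $A=[\bm{a}_1,\dots,\bm{a}_n]\in\mathbb{R}^{m\times n}$ have columns with $\|\bm{a}_i\|_2=1$ for all $i$. Suppose the mutual coherence $\mu=\max_{1\leq i<j\leq n}|\langle \bm{a}_i,\bm{a}_j\rangle|$ satisfies $$\mu<\frac{1}{2k-1}.$$ Let $\bm{x}\in\mathbb{R}^n$ be arbitrary (not necessarily sparse), let $\epsilon\geq 0$, let $\bm{z}\in\mathbb{R}^m$ with $\|\bm{z}\|_2\leq\epsilon$, and set $\bm{b}=A\bm{x}+\bm{z}$. Let $\lambda>0$ and let $\bm{x}^{\sharp}$ be an optimal solution of $$\min_{\bm{y}\in\mathbb{R}^n}\ \|\bm{y}\|_1+\frac{1}{2\lambda}\|\bm{b}-A\bm{y}\|_2^2 .$$ Define $$\alpha_1=\frac{\sqrt{1+(k-1)\mu}}{1-(k-1)\mu},\qquad \alpha_2=\frac{\sqrt{k}\,\mu}{1-(k-1)\mu},$$ $$f_k(t)=kt^2+3\sqrt{k}\,t+3,\qquad g_k(t)=2kt^2+4\sqrt{k}\,t+1 .$$ Then $$\|A(\bm{x}^{\sharp}-\bm{x})\|_2\leq \frac{2\lambda}{\sqrt{k}\alpha_1\lambda+\epsilon}\,\|\bm{x}-\bm{x}_{[k]}\|_1+2(\sqrt{k}\alpha_1\lambda+\epsilon),$$ and $$\|\bm{x}^{\sharp}-\bm{x}\|_2\leq \frac{2\sqrt{k}\alpha_1 f_k(\alpha_2)\lambda+2g_k(\alpha_2)\epsilon}{\sqrt{k}(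1-\sqrt{k}\alpha_2)(\sqrt{k}\alpha_1\lambda+\epsilon)}\,\|\bm{x}-\bm{x}_{[k]}\|_1+\frac{\big(\sqrt{k}\alpha_1(5+2\sqrt{k}\alpha_2)\lambda+g_k(\alpha_2)\epsilon\big)(\sqrt{k}\alpha_1\lambda+\epsilon)}{\sqrt{k}(1-\sqrt{k}\alpha_2)\lambda}.$$
   Context: For $\bm{x}\in\mathbb{R}^n$, $\bm{x}_{[k]}$ denotes a best $k$-term approximation of $\bm{x}$, i.e. $\bm{x}_{[k]}\in\arg\min_{\|\bm{y}\|_0\leq k}\|\bm{y}-\bm{x}\|_2$, where $\|\bm{y}\|_0$ is the number of nonzero entries of $\bm{y}$. *)

(* Defs.v *)
From HB Require Import structures.
From mathcomp Require Import all_boot all_order all_algebra.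
From mathcomp Require Import reals.
Set Implicit Arguments. Unset Strict Implicit. Unset Printing Implicit Defensive.
Import Order.TTheory GRing.Theory Num.Theory.
Local Open Scope ring_scope.

Section Defs.
Variable R : realType.

Definition dotv (p : nat) (u v : 'cV[R]_p) : R := \sum_(l < p) u l 0 * v l 0.
Definition norm2 (p : nat) (u : 'cV[R]_p) : R := Num.sqrt (\sum_(l < p) u l 0 ^+ 2).
Definition norm1 (p : nat) (u : 'cV[R]_p) : R := \sum_(l < p) `|u l 0|.
Definition norm0 (p : nat) (u : 'cV[R]_p) : nat := #|[set l : 'I_p | u l 0 != 0]|.

Definition best_kterm (p k : nat) (x xk : 'cV[R]_p) : Prop :=
  (norm0 xk <= k)%N /\
  forall y : 'cV[R]_p, (norm0 y <= k)%N -> norm2 (xk - x) <= norm2 (y - x).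

(* mutual coherence: max_{i<j} |<a_i,a_j>| (0 if there is no such pair) *)
Definition coherence (m n : nat) (A : 'M[R]_(m, n)) : R :=
  \big[Num.max/0]_(i < n) \big[Num.max/0]_(j < n | (i < j)%N)
     `|dotv (col i A) (col j A)|.

Definition lasso_obj (m n : nat) (A : 'M[R]_(m, n)) (b : 'cV[R]_m) (lam : R)
    (y : 'cV[R]_n) : R :=
  norm1 y + (2 * lam)^-1 * norm2 (b - A *m y) ^+ 2.

Definition alpha1 (k : nat) (mu : R) : R :=
  Num.sqrt (1 + (k%:R - 1) * mu) / (1 - (k%:R - 1) * mu).
Definition alpha2 (k : nat) (mu : R) : R :=
  Num.sqrt k%:R * mu / (1 - (k%:R - 1) * mu).
Definition fk (k : nat) (t : R) : R := k%:R * t ^+ 2 + 3 * Num.sqrt k%:R * t + 3.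
Definition gk (k : nat) (t : R) : R := 2 * k%:R * t ^+ 2 + 4 * Num.sqrt k%:R * t + 1.

End Defs.

(* Main.v *)
Require Import Defs.
From HB Require Import structures.
From mathcomp Require Import all_boot all_order all_algebra.
From mathcomp Require Import reals.
From mathcomp Require Import ring lra.
Import Order.TTheory GRing.Theory Num.Theory.
Local Open Scope ring_scope.

Section Aux.
Variable R : realType.

Lemma CS (I : finType) (P : pred I) (a b : I -> R) :
  (\sum_(i | P i) a i * b i) ^+ 2 <=
  (\sum_(i | P i) a i ^+ 2) * (\sum_(i | P i) b i ^+ 2).
Proof.
set A := \sum_(i | P i) a i ^+ 2; set B := \sum_(i | P i) b i ^+ 2.
set C := \sum_(i | P i) a i * b i.
have B0 : 0 <= B by apply: sumr_ge0 => i _; apply: sqr_ge0.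
have H : 0 <= \sum_(i | P i) (B * a i - C * b i) ^+ 2 by apply: sumr_ge0 => i _; apply: sqr_ge0.
have E : \sum_(i | P i) (B * a i - C * b i) ^+ 2 = B * (A * B - C ^+ 2).
  transitivity (\sum_(i | P i) (B ^+ 2 * a i ^+ 2 - (2 * B * C) * (a i * b i) + C ^+ 2 * b i ^+ 2)).
    by apply: eq_bigr => i _; ring.
  rewrite big_split /= sumrB -!mulr_sumr -/A -/B -/C; ring.
rewrite E in H.
have [Be|Bne] := eqVneq B 0.
  have Hb : forall i, P i -> b i ^+ 2 = 0.
    by apply: psumr_eq0P => // i _; apply: sqr_ge0.
  have -> : C = 0.
    by rewrite /C big1 // => i Pi; move/eqP: (Hb i Pi); rewrite sqrf_eq0 => /eqP ->; rewrite mulr0.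
  by rewrite Be expr0n /= mulr0.
have Bp : 0 < B by rewrite lt_def Bne B0.
rewrite pmulr_rge0 // subr_ge0 in H.
exact: H.
Qed.

Lemma CSs (I : finType) (P : pred I) (a b : I -> R) :
  \sum_(i | P i) a i * b i <=
  Num.sqrt (\sum_(i | P i) a i ^+ 2) * Num.sqrt (\sum_(i | P i) b i ^+ 2).
Proof.
have A0 : 0 <= \sum_(i | P i) a i ^+ 2 by apply: sumr_ge0 => i _; apply: sqr_ge0.
rewrite -sqrtrM //.
apply: (le_trans _ (ler_wsqrtr (CS _ P a b))).
by rewrite sqrtr_sqr ler_norm.
Qed.

Lemma CSt (I : finType) (a b : I -> R) :
  \sum_i a i * b i <=
  Num.sqrt (\sum_i a i ^+ 2) * Num.sqrt (\sum_i b i ^+ 2).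
Proof. exact: (CSs _ predT a b). Qed.

Lemma sqrtD_le (a b : R) : 0 <= a -> 0 <= b ->
  Num.sqrt (a + b) <= Num.sqrt a + Num.sqrt b.
Proof.
move=> a0 b0.
have h : 0 <= Num.sqrt a + Num.sqrt b by rewrite addr_ge0 // sqrtr_ge0.
rewrite -(ger0_norm h) -sqrtr_sqr ler_wsqrtr //.
rewrite sqrrD !sqr_sqrtr //.
have := sqrtr_ge0 a; have := sqrtr_ge0 b; nra.
Qed.

Lemma L1_CS (I : finType) (P : pred I) (k : nat) (v : I -> R) :
  (#|P| <= k)%N ->
  \sum_(i | P i) `|v i| <= Num.sqrt k%:R * Num.sqrt (\sum_(i | P i) v i ^+ 2).
Proof.
move=> Hk.
have := CSs _ P (fun _ => 1) (fun i => `|v i|).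
have -> : \sum_(i | P i) 1 * `|v i| = \sum_(i | P i) `|v i| by apply: eq_bigr => i _; rewrite mul1r.
have -> : \sum_(i | P i) (1:R) ^+ 2 = #|P|%:R.
  by rewrite (eq_bigr (fun _ => 1)) ?sumr_const // => i _; rewrite expr1n.
have -> : \sum_(i | P i) `|v i| ^+ 2 = \sum_(i | P i) v i ^+ 2 by apply: eq_bigr => i _; rewrite real_normK // num_real.
move=> H; apply: le_trans H _; apply: ler_wpM2r; first exact: sqrtr_ge0.
by apply: ler_wsqrtr; rewrite ler_nat.
Qed.
End Aux.

Section Main.
Variable R : realType.
Variables (m n k : nat) (A : 'M[R]_(m, n)) (mu : R).
Definition G (i j : 'I_n) : R := \sum_(l < m) A l i * A l j.
Hypothesis Gdiag : forall i, G i i = 1.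
Hypothesis Goff : forall i j, i != j -> `|G i j| <= mu.
Hypothesis mu0 : 0 <= mu.

Lemma expand (S T : pred 'I_n) (h : 'I_n -> R) :
  \sum_(l < m) (\sum_(i | S i) A l i * h i) * (\sum_(j | T j) A l j * h j)
  = \sum_(i | S i) \sum_(j | T j) h i * h j * G i j.
Proof.
transitivity (\sum_(l < m) \sum_(i | S i) \sum_(j | T j) h i * h j * (A l i * A l j)).
  apply: eq_bigr => l _; rewrite mulr_suml; apply: eq_bigr => i _.
  rewrite mulr_sumr; apply: eq_bigr => j _; ring.
rewrite exchange_big; apply: eq_bigr => i _.
rewrite exchange_big; apply: eq_bigr => j _.
by rewrite /G mulr_sumr.
Qed.

Lemma diag_split (S : pred 'I_n) (F : 'I_n -> 'I_n -> R) :
  \sum_(i | S i) \sum_(j | S j) F i j =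
  \sum_(i | S i) F i i + \sum_(i | S i) \sum_(j | S j && (j != i)) F i j.
Proof.
rewrite -big_split; apply: eq_bigr => i Si.
by rewrite (bigD1 i Si).
Qed.

Lemma quad_bound (S : {set 'I_n}) (h : 'I_n -> R) :
  `| \sum_(i in S) \sum_(j in S) h i * h j * G i j - \sum_(i in S) h i ^+ 2 |
  <= mu * ((\sum_(i in S) `|h i|) ^+ 2 - \sum_(i in S) h i ^+ 2).
Proof.
rewrite diag_split.
have -> : \sum_(i in S) h i * h i * G i i = \sum_(i in S) h i ^+ 2.
  by apply: eq_bigr => i _; rewrite Gdiag mulr1 expr2.
rewrite addrC addKr.
have -> : (\sum_(i in S) `|h i|) ^+ 2 =
   \sum_(i in S) \sum_(j in S) `|h i| * `|h j|.
  by rewrite expr2 mulr_suml; apply: eq_bigr => i _; rewrite mulr_sumr.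
rewrite diag_split.
have -> : \sum_(i in S) `|h i| * `|h i| = \sum_(i in S) h i ^+ 2.
  by apply: eq_bigr => i _; rewrite -expr2 real_normK // num_real.
rewrite addrC addKr mulr_sumr.
apply: le_trans (ler_norm_sum _ _ _) _.
apply: ler_sum => i Si; rewrite mulr_sumr.
apply: le_trans (ler_norm_sum _ _ _) _.
apply: ler_sum => j /andP [Sj ji].
rewrite normrM [`|h i * h j|]normrM mulrC.
apply: ler_wpM2r; first by rewrite mulr_ge0.
by apply: Goff; rewrite eq_sym.
Qed.

Lemma cross_bound (S : {set 'I_n}) (h : 'I_n -> R) :
  `| \sum_(i in S) \sum_(j in ~: S) h i * h j * G i j |
  <= mu * ((\sum_(i in S) `|h i|) * (\sum_(j in ~: S) `|h j|)).
Proof.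
rewrite mulr_suml mulr_sumr.
apply: le_trans (ler_norm_sum _ _ _) _.
apply: ler_sum => i Si; rewrite mulr_sumr mulr_sumr.
apply: le_trans (ler_norm_sum _ _ _) _.
apply: ler_sum => j Sj.
rewrite normrM [`|h i * h j|]normrM [X in _ <= X]mulrC.
apply: ler_wpM2l; first by rewrite mulr_ge0.
apply: Goff; apply/negP => /eqP eij; move: Sj; rewrite in_setC -eij Si.
by [].
Qed.

Lemma sq_le (a b : R) : 0 <= a -> a <= b -> a ^+ 2 <= b ^+ 2.
Proof. move=> a0 ab; rewrite !expr2; apply: ler_pM => //. Qed.

Lemma LS (S : {set 'I_n}) (h : 'I_n -> R) : (#|S| <= k)%N -> (1 <= k)%N ->
  (1 - (k%:R - 1) * mu) * Num.sqrt (\sum_(i in S) h i ^+ 2) <=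
  Num.sqrt (1 + (k%:R - 1) * mu) * Num.sqrt (\sum_(l < m) (\sum_i A l i * h i) ^+ 2)
  + mu * Num.sqrt k%:R * \sum_(j in ~: S) `|h j|.
Proof.
move=> Sk k1.
set N2 := \sum_(i in S) h i ^+ 2.
set N1 := \sum_(i in S) `|h i|.
set N1c := \sum_(j in ~: S) `|h j|.
set W := Num.sqrt (\sum_(l < m) (\sum_i A l i * h i) ^+ 2).
set q := \sum_(i in S) \sum_(j in S) h i * h j * G i j.
set cr := \sum_(i in S) \sum_(j in ~: S) h i * h j * G i j.
have N20 : 0 <= N2 by apply: sumr_ge0 => i _; apply: sqr_ge0.
have N10 : 0 <= N1 by apply: sumr_ge0 => i _.
have N1c0 : 0 <= N1c by apply: sumr_ge0 => i _.
have W0 : 0 <= W by apply: sqrtr_ge0.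
set r := Num.sqrt N2.
have r0 : 0 <= r by apply: sqrtr_ge0.
have rr : N2 = r ^+ 2 by rewrite sqr_sqrtr.
set s := Num.sqrt k%:R.
have s0 : 0 <= s by apply: sqrtr_ge0.
have ss : k%:R = s ^+ 2 by rewrite sqr_sqrtr.
have N1b : N1 <= s * r by apply: L1_CS; rewrite cardE /= -cardE.
have N1sq : N1 ^+ 2 <= k%:R * N2 by rewrite ss rr -exprMn; apply: sq_le.
have qb := quad_bound S h; rewrite -/q -/N2 -/N1 in qb.
have k1R : 1 <= (k%:R : R) by rewrite ler1n.
have qlo : (1 - (k%:R - 1) * mu) * N2 <= q.
  move: qb; rewrite ler_norml => /andP [h1 _].
  have : mu * (N1 ^+ 2 - N2) <= mu * (k%:R * N2 - N2) by apply: ler_wpM2l => //; lra.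
  nra.
have qhi : q <= (1 + (k%:R - 1) * mu) * N2.
  have h1 := le_trans (ler_norm (q - N2)) qb.
  have : mu * (N1 ^+ 2 - N2) <= mu * (k%:R * N2 - N2) by apply: ler_wpM2l => //; lra.
  nra.
have Ea : \sum_(l < m) (\sum_(i in S) A l i * h i) ^+ 2 = q.
  rewrite /q; etransitivity; last exact: (expand (fun i => i \in S) (fun j => j \in S) h).
  by apply: eq_bigr => l _; rewrite expr2.
have Eab : \sum_(l < m) (\sum_(i in S) A l i * h i) * (\sum_(i in ~: S) A l i * h i) = cr.
  exact: (expand (fun i => i \in S) (fun j => j \in ~: S) h).
have Ew : forall l, \sum_i A l i * h i = (\sum_(i in S) A l i * h i) + (\sum_(i in ~: S) A l i * h i).
  move=> l; rewrite (bigID (fun i => i \in S)) /=; congr (_ + _).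
  by apply: eq_bigl => i; rewrite in_setC.
have Eaw : \sum_(l < m) (\sum_(i in S) A l i * h i) * (\sum_i A l i * h i) = q + cr.
  rewrite -Ea -Eab -big_split /=; apply: eq_bigr => l _; rewrite Ew; ring.
have q0 : 0 <= q by rewrite -Ea; apply: sumr_ge0 => l _; apply: sqr_ge0.
have aw : q + cr <= Num.sqrt q * W.
  rewrite -Eaw -Ea; exact: (@CSt R _ (fun l : 'I_m => \sum_(i in S) A l i * h i) (fun l => \sum_i A l i * h i)).
have sq : Num.sqrt q <= Num.sqrt (1 + (k%:R - 1) * mu) * r.
  rewrite /r -sqrtrM; first by apply: ler_wsqrtr.
  have : 0 <= (k%:R - 1) * mu by apply: mulr_ge0 => //; lra.
  lra.
have crb := cross_bound S h; rewrite -/cr -/N1 -/N1c in crb.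
have crb2 : - cr <= mu * (s * r * N1c).
  apply: le_trans (ler_normlW _) _; first by rewrite normrN; exact: crb.
  apply: ler_wpM2l => //; apply: ler_wpM2r => //.
set se := Num.sqrt (1 + (k%:R - 1) * mu).
have se0 : 0 <= se by apply: sqrtr_ge0.
have main : (1 - (k%:R - 1) * mu) * r ^+ 2 <= r * (se * W + mu * s * N1c).
  rewrite -rr.
  have : Num.sqrt q * W <= se * r * W by apply: ler_wpM2r.
  nra.
have [r0e|rpos] := eqVneq r 0.
  rewrite r0e mulr0; apply: addr_ge0; first by apply: mulr_ge0.
  by apply: mulr_ge0 => //; apply: mulr_ge0.
have rp : 0 < r by rewrite lt_def rpos r0.
rewrite -(ler_pM2l rp); move: main; rewrite expr2; nra.
Qed.

Lemma topk (T : {set 'I_n}) (h : 'I_n -> R) : exists S : {set 'I_n},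
  [/\ S \subset ~: T, (#|S| <= k)%N &
      forall j, j \in ~: T -> j \notin S -> k%:R * `|h j| <= \sum_(i in S) `|h i|].
Proof.
pose Pm := fun S : {set 'I_n} => (S \subset ~: T) && (#|S| <= k)%N.
pose F := fun S : {set 'I_n} => \sum_(i in S) `|h i|.
have P0 : Pm set0 by rewrite /Pm sub0set cards0.
case: (@arg_maxP _ R _ set0 Pm F P0) => S /andP [ST Sk] Hmax.
exists S; split => // j jT jS.
have F0 : 0 <= F S by apply: sumr_ge0.
have [Slt|Sge] := ltnP #|S| k.
  have P1 : Pm (j |: S).
    by rewrite /Pm subUset sub1set jT ST cardsU1 jS add1n.
  have := Hmax _ P1; rewrite /F big_setU1 //= -/(F S) => H.
  have : `|h j| <= 0 by lra.
  rewrite normr_le0 => /eqP ->; rewrite normr0 mulr0 //.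
have Sk' : #|S| = k by apply/eqP; rewrite eqn_leq Sk Sge.
have -> : k%:R * `|h j| = \sum_(i in S) `|h j|.
  by rewrite sumr_const Sk' mulr_natl.
apply: ler_sum => i iS.
have P2 : Pm (j |: (S :\ i)).
  rewrite /Pm subUset sub1set jT (subset_trans (subsetDl S [set i]) ST) /=.
  rewrite cardsU1 in_setD1 negb_and jS orbT add1n.
  by move: Sk; rewrite (cardsD1 i S) iS.
have := Hmax _ P2; rewrite /F big_setU1 /=; last by rewrite in_setD1 negb_and jS orbT.
rewrite (big_setD1 i iS) /=. lra.
Qed.

End Main.

Section Coh.
Variable R : realType.
Variables (m n : nat) (A : 'M[R]_(m, n)).

Lemma dotv_G i j : dotv (col i A) (col j A) = G _ _ _ A i j.
Proof. by rewrite /dotv /G; apply: eq_bigr => l _; rewrite !mxE. Qed.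

Lemma coh0 : 0 <= coherence A.
Proof. exact: bigmax_ge_id. Qed.

Lemma G_sym i j : G _ _ _ A i j = G _ _ _ A j i.
Proof. by rewrite /G; apply: eq_bigr => l _; rewrite mulrC. Qed.

Lemma coh_off i j : i != j -> `|G _ _ _ A i j| <= coherence A.
Proof.
wlog lt : i j / (i < j)%N.
  move=> W ij; have [lt|ge] := ltnP i j; first exact: W.
  rewrite G_sym; apply: W; last by rewrite eq_sym.
  by rewrite ltn_neqAle ge andbT; apply: contra ij => /eqP e; apply/eqP/val_inj.
move=> _; rewrite -dotv_G.
apply: le_trans (le_bigmax _ _ i).
exact: (le_bigmax_cond _ _ lt).
Qed.

Lemma coh_diag : (forall i : 'I_n, norm2 (col i A) = 1) -> forall i, G _ _ _ A i i = 1.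
Proof.
move=> H i; have := H i; rewrite /norm2 => e.
have s0 : 0 <= \sum_(l < m) col i A l 0 ^+ 2 by apply: sumr_ge0 => l _; apply: sqr_ge0.
have : (Num.sqrt (\sum_(l < m) col i A l 0 ^+ 2)) ^+ 2 = 1 by rewrite e expr1n.
rewrite sqr_sqrtr // => <-.
by rewrite /G; apply: eq_bigr => l _; rewrite mxE expr2.
Qed.

End Coh.

Lemma final_alg (R : realType) (sk a1 a2 lam eps sg : R) : 0 < sk -> 0 < a1 -> 0 <= a2 -> sk * a2 < 1 ->
  0 < lam -> 0 <= eps -> 0 <= sg ->
  (2 + sk * a2) * a1 * (2 * lam * sg / (sk * a1 * lam + eps) + 2 * (sk * a1 * lam + eps))
  + (1 + sk * a2) ^+ 2 * ((4 * lam * sg + (sk * a1 * lam + eps) ^+ 2) / (2 * lam * (1 - sk * a2))) / sk <=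
  (2 * sk * a1 * (sk ^+ 2 * a2 ^+ 2 + 3 * sk * a2 + 3) * lam + 2 * (2 * sk ^+ 2 * a2 ^+ 2 + 4 * sk * a2 + 1) * eps)
    / (sk * (1 - sk * a2) * (sk * a1 * lam + eps)) * sg
  + (sk * a1 * (5 + 2 * sk * a2) * lam + (2 * sk ^+ 2 * a2 ^+ 2 + 4 * sk * a2 + 1) * eps) * (sk * a1 * lam + eps)
    / (sk * (1 - sk * a2) * lam).
Proof.
move=> s0 a10 a20 u1 l0 e0 g0.
have c0 : 0 < sk * a1 * lam + eps by rewrite ltr_wpDr // !mulr_gt0.
have u0 : 0 <= sk * a2 by rewrite mulr_ge0 // ltW.
set L := (X in X <= _); set Rr := (X in _ <= X).
have E : Rr - L = (4 * lam * sg * ((sk * a2) ^+ 2 + 2 * (sk * a2)) + (sk * a1 * lam + eps) ^+ 2 * (3 * (sk * a2) ^+ 2 + 6 * (sk * a2) + 1)) / (2 * sk * lam * (1 - sk * a2)).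
  rewrite /L /Rr; field.
  have u2 : 0 < 1 - sk * a2 by lra.
  by rewrite (gt_eqF c0) (gt_eqF l0) (gt_eqF s0) (gt_eqF u2).
rewrite -subr_ge0 E.
apply: divr_ge0.
  have h1 : 0 <= 4 * lam * sg by rewrite mulr_ge0 // mulr_ge0 // ltW.
  have sq := sqr_ge0 (sk * a2).
  have h2 : 0 <= (sk * a2) ^+ 2 + 2 * (sk * a2) by lra.
  have h3 : 0 <= 3 * (sk * a2) ^+ 2 + 6 * (sk * a2) + 1 by lra.
  by apply: addr_ge0; apply: mulr_ge0 => //; apply: sqr_ge0.
have u2 : 0 < 1 - sk * a2 by lra.
by rewrite !mulr_ge0 // ltW.
Qed.

Lemma WP_bounds (R : realType) (W P c lam sg u : R) : 0 <= W -> 0 <= P -> 0 < c -> 0 < lam -> 0 <= sg -> u < 1 ->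
  W ^+ 2 <= 2 * c * W + 4 * lam * sg - 2 * lam * (1 - u) * P ->
  W <= 2 * lam * sg / c + 2 * c /\ P <= (4 * lam * sg + c ^+ 2) / (2 * lam * (1 - u)).
Proof.
move=> W0 P0 c0 l0 g0 u1 H.
have u2 : 0 < 1 - u by lra.
have lP : 0 <= 2 * lam * (1 - u) * P by rewrite !mulr_ge0 // ltW.
split.
  set t := 2 * lam * sg / c.
  have t0 : 0 <= t by rewrite /t divr_ge0 // ?mulr_ge0 // ltW.
  have ct : 4 * lam * sg = 2 * c * t by rewrite /t; field; rewrite gt_eqF.
  rewrite leNgt; apply/negP => Wlt.
  have h1 : W ^+ 2 <= 2 * c * W + 2 * c * t by lra.
  have h2 : t < W - 2 * c by lra.
  have h3 : (t + 2 * c) * t <= W * (W - 2 * c).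
    apply: ler_pM; lra.
  have h4 : (t + 2 * c) * t < W * (W - 2 * c) -> False by nra.
  apply: h4.
  have : t * t < W * (W - 2 * c) - 2 * c * t by nra.
  nra.
have l2 : 0 < 2 * lam * (1 - u) by rewrite !mulr_gt0.
rewrite ler_pdivlMr //.
have := sqr_ge0 (W - c).
nra.
Qed.

Theorem theorem1 (R : realType) (m n k : nat) (A : 'M[R]_(m, n))
    (x : 'cV[R]_n) (eps : R) (z : 'cV[R]_m) (lam : R)
    (xs xk : 'cV[R]_n) :
  (2 <= k)%N ->
  (forall i : 'I_n, norm2 (col i A) = 1) ->
  coherence A < (2 * k%:R - 1)^-1 ->
  0 <= eps ->
  norm2 z <= eps ->
  0 < lam ->
  (forall y : 'cV[R]_n,
     lasso_obj A (A *m x + z) lam xs <= lasso_obj A (A *m x + z) lam y) ->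
  best_kterm k x xk ->
  let mu := coherence A in
  let a1 := alpha1 k mu in
  let a2 := alpha2 k mu in
  let sk := Num.sqrt (k%:R : R) in
  norm2 (A *m (xs - x)) <=
    2 * lam / (sk * a1 * lam + eps) * norm1 (x - xk) + 2 * (sk * a1 * lam + eps)
  /\
  norm2 (xs - x) <=
    (2 * sk * a1 * fk k a2 * lam + 2 * gk k a2 * eps)
      / (sk * (1 - sk * a2) * (sk * a1 * lam + eps)) * norm1 (x - xk)
    + (sk * a1 * (5 + 2 * sk * a2) * lam + gk k a2 * eps) * (sk * a1 * lam + eps)
      / (sk * (1 - sk * a2) * lam).
Proof.
move=> k2 Hcol Hcoh eps0 Hz lam0 Hopt [Hk0 _] mu a1 a2 sk.
have mu0 : 0 <= mu := coh0 R m n A.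
have Gd := @coh_diag R m n A Hcol.
have Go := @coh_off R m n A.
have k1 : (0 < k)%N by apply: leq_trans k2.
have kR : (2 : R) <= k%:R by rewrite ler_nat.
have sk0 : 0 < sk by rewrite sqrtr_gt0; lra.
have skk : k%:R = sk ^+ 2 by rewrite sqr_sqrtr //; lra.
have muc : mu * (2 * k%:R - 1) < 1.
  have c0 : 0 < 2 * k%:R - 1 :> R by lra.
  have := Hcoh; rewrite -(ltr_pM2r c0) mulVf ?gt_eqF //.
set d := 1 - (k%:R - 1) * mu.
have d0 : 0 < d by rewrite /d; nra.
set se := Num.sqrt (1 + (k%:R - 1) * mu).
have se0 : 0 < se by rewrite sqrtr_gt0; nra.
have a1E : a1 = se / d by [].
have a2E : a2 = sk * mu / d by [].
have a10 : 0 < a1 by rewrite a1E divr_gt0.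
have a20 : 0 <= a2 by rewrite a2E divr_ge0 // ?mulr_ge0 // ltW.
have u1 : sk * a2 < 1.
  have -> : sk * a2 = k%:R * mu / d by rewrite a2E skk; field; rewrite gt_eqF.
  rewrite ltr_pdivrMr // mul1r /d; nra.
pose h := fun i : 'I_n => xs i 0 - x i 0.
pose T := [set l : 'I_n | xk l 0 != 0].
have Tk : (#|T| <= k)%N := Hk0.
pose W := Num.sqrt (\sum_(l < m) (\sum_i A l i * h i) ^+ 2).
have W0 : 0 <= W by apply: sqrtr_ge0.
have EW : norm2 (A *m (xs - x)) = W.
  rewrite /norm2 /W; congr Num.sqrt; apply: eq_bigr => l _; rewrite !mxE; congr (_ ^+ 2).
  by apply: eq_bigr => i _; rewrite !mxE.
pose P := \sum_(i in ~: T) `|h i|.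
have P0 : 0 <= P by apply: sumr_ge0.
pose sg := \sum_(i in ~: T) `|x i 0|.
have sg0 : 0 <= sg by apply: sumr_ge0.
have sg_le : sg <= norm1 (x - xk).
  rewrite /norm1 (bigID (fun i => i \in T)) /=.
  have -> : \sum_(i | i \notin T) `|(x - xk) i 0| = sg.
    rewrite /sg; apply: eq_big => i; first by rewrite in_setC.
    rewrite inE negbK => /eqP e; by rewrite !mxE e subr0.
  rewrite lerDr; exact: sumr_ge0.
pose N1T := \sum_(i in T) `|h i|.
have LT := @LS R m n k A mu Gd Go mu0 T h Tk k1.
have N1Tb : N1T <= sk * Num.sqrt (\sum_(i in T) h i ^+ 2) by apply: (@L1_CS R).
have N1T_le : N1T <= sk * a1 * W + sk * a2 * P.
  have -> : sk * a1 * W + sk * a2 * P = sk * ((se * W + mu * sk * P) / d).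
    by rewrite a1E a2E; field; rewrite gt_eqF.
  apply: le_trans N1Tb _; apply: ler_wpM2l; first exact: ltW.
  by rewrite ler_pdivlMr // mulrC.
have PE : \sum_(i | i \notin T) `|h i| = P by apply: eq_bigl => i; rewrite in_setC.
have sgE : \sum_(i | i \notin T) `|x i 0| = sg by apply: eq_bigl => i; rewrite in_setC.
have N1x : norm1 x - norm1 xs <= N1T - P + 2 * sg.
  rewrite /norm1 -sumrB (bigID (fun i => i \in T)) /=.
  have A1 : \sum_(i | i \in T) (`|x i 0| - `|xs i 0|) <= N1T.
    apply: ler_sum => i _; rewrite /h distrC; exact: lerB_dist.
  have A2 : \sum_(i | i \notin T) (`|x i 0| - `|xs i 0|) <= 2 * sg - P.
    rewrite -PE -sgE mulr_sumr -sumrB; apply: ler_sum => i _.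
    have := ler_normB (xs i 0) (x i 0); rewrite /h; lra.
  lra.
pose w := fun l : 'I_m => \sum_i A l i * h i.
have Ew : forall l, (A *m x + z - A *m xs) l 0 = z l 0 - w l.
  move=> l; rewrite !mxE /w.
  have -> : \sum_i A l i * h i = \sum_i A l i * xs i 0 - \sum_i A l i * x i 0.
    by rewrite -sumrB; apply: eq_bigr => i _; rewrite /h mulrBr.
  set a := \sum_i A l i * x i 0; set b := \sum_i A l i * xs i 0.
  by rewrite opprB addrAC addrC.
have Ob := Hopt x; rewrite /lasso_obj in Ob.
set Z2 := \sum_(l < m) z l 0 ^+ 2.
set ZW := \sum_(l < m) z l 0 * w l.
have Z20 : 0 <= Z2 by apply: sumr_ge0 => l _; apply: sqr_ge0.
have W2 : W ^+ 2 = \sum_(l < m) w l ^+ 2.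
  by rewrite /W sqr_sqrtr //; apply: sumr_ge0 => l _; apply: sqr_ge0.
have E1 : norm2 (A *m x + z - A *m xs) ^+ 2 = Z2 - 2 * ZW + W ^+ 2.
  rewrite /norm2 sqr_sqrtr; last by apply: sumr_ge0 => l _; apply: sqr_ge0.
  rewrite W2 /Z2 /ZW mulr_sumr -sumrB -big_split /=; apply: eq_bigr => l _.
  rewrite Ew; ring.
have E2 : norm2 (A *m x + z - A *m x) ^+ 2 = Z2.
  rewrite addrAC subrr add0r /norm2 sqr_sqrtr //.
have ZWb : ZW <= eps * W.
  apply: le_trans (@CSt R _ (fun l => z l 0) w) _.
  apply: ler_wpM2r => //.
rewrite E1 E2 in Ob.
have il0 : 0 < (2 * lam)^-1 by rewrite invr_gt0 mulr_gt0.
have Ob2 : (2 * lam)^-1 * (W ^+ 2 - 2 * ZW) <= norm1 x - norm1 xs.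
  have -> : (2 * lam)^-1 * (W ^+ 2 - 2 * ZW) = (2 * lam)^-1 * (Z2 - 2 * ZW + W ^+ 2) - (2 * lam)^-1 * Z2 by ring.
  lra.
rewrite ler_pdivrMl ?mulr_gt0 // in Ob2.
have Q : W ^+ 2 <= 2 * (sk * a1 * lam + eps) * W + 4 * lam * sg - 2 * lam * (1 - sk * a2) * P.
  have := ler_wpM2l (ltW lam0) N1T_le.
  have := ler_wpM2l (ltW lam0) N1x.
  nra.

have c0 : 0 < sk * a1 * lam + eps by have := mulr_gt0 (mulr_gt0 sk0 a10) lam0; lra.
have [Wb Pb] := @WP_bounds R _ _ _ _ _ _ W0 P0 c0 lam0 sg0 u1 Q.
split.
  rewrite EW; apply: le_trans Wb _.
  rewrite lerD2r mulrAC; apply: ler_wpM2l => //.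
  by rewrite divr_ge0 // ?ltW // mulr_gt0.
have [S [ST Sk HS]] := @topk R n k T h.
have LSS := @LS R m n k A mu Gd Go mu0 S h Sk k1.
rewrite -/d -/se -/W -/sk in LSS.
have STi : forall i, i \in S -> i \notin T.
  by move=> i iS; move/subsetP: ST => /(_ i iS); rewrite in_setC.
have habs : \sum_i `|h i| = N1T + P.
  by rewrite (bigID (fun i => i \in T)) /= PE.
have N1c : \sum_(j in ~: S) `|h j| <= N1T + P.
  rewrite -habs [X in _ <= X](bigID (fun i => i \in ~: S)) /= lerDl.
  exact: sumr_ge0.
pose R2 := \sum_(i | (i \notin T) && (i \notin S)) h i ^+ 2.
have R20 : 0 <= R2 by apply: sumr_ge0 => i _; apply: sqr_ge0.
have SE : forall F : 'I_n -> R, \sum_(i | (i \notin T) && (i \in S)) F i = \sum_(i in S) F i.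
  move=> F; apply: eq_bigl => i; case iS: (i \in S); last by rewrite andbF.
  by rewrite andbT STi.
have PS : \sum_(i | (i \notin T) && (i \in S)) `|h i| + \sum_(i | (i \notin T) && (i \notin S)) `|h i| = P.
  by rewrite -PE [X in _ = X](bigID (fun i => i \in S)).
set N1S := \sum_(i in S) `|h i|.
have N1S0 : 0 <= N1S by apply: sumr_ge0.
set Prest := \sum_(i | (i \notin T) && (i \notin S)) `|h i|.
have Prest0 : 0 <= Prest by apply: sumr_ge0.
rewrite SE -/N1S -/Prest in PS.
have kpos : (0 : R) < k%:R by lra.
have R2b : R2 <= P ^+ 2 / k%:R.
  have : R2 <= Prest * (N1S / k%:R).
    rewrite /Prest mulr_suml; apply: ler_sum => i /andP [iT iS].
    rewrite -real_normK ?num_real // expr2; apply: ler_wpM2l => //.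
    by rewrite ler_pdivlMr // mulrC; apply: HS => //; rewrite in_setC.
  move=> H; apply: le_trans H _.
  rewrite mulrA ler_pM2r ?invr_gt0 // expr2; nra.
have hsq : \sum_i h i ^+ 2 = \sum_(i in T) h i ^+ 2 + \sum_(i in S) h i ^+ 2 + R2.
  rewrite (bigID (fun i => i \in T)) /= -addrA; congr (_ + _).
  by rewrite (bigID (fun i => i \in S)) /= SE.
have En : norm2 (xs - x) = Num.sqrt (\sum_i h i ^+ 2).
  by rewrite /norm2; congr Num.sqrt; apply: eq_bigr => i _; rewrite !mxE.
set rT := Num.sqrt (\sum_(i in T) h i ^+ 2) in LT N1Tb.
set rS := Num.sqrt (\sum_(i in S) h i ^+ 2) in LSS.
set rR := Num.sqrt R2.
have N2T0 : 0 <= \sum_(i in T) h i ^+ 2 by apply: sumr_ge0 => i _; apply: sqr_ge0.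
have N2S0 : 0 <= \sum_(i in S) h i ^+ 2 by apply: sumr_ge0 => i _; apply: sqr_ge0.
have Hn : norm2 (xs - x) <= rT + rS + rR.
  rewrite En hsq; apply: le_trans (@sqrtD_le R _ _ (addr_ge0 N2T0 N2S0) R20) _.
  by rewrite lerD2r; apply: (@sqrtD_le R).
have rRb : rR <= P / sk.
  apply: le_trans (ler_wsqrtr R2b) _.
  have -> : P ^+ 2 / k%:R = (P / sk) ^+ 2 by rewrite skk expr_div_n.
  by rewrite sqrtr_sqr ger0_norm // divr_ge0 // ltW.
have rTb : rT <= a1 * W + a2 * P.
  have -> : a1 * W + a2 * P = (se * W + mu * sk * P) / d.
    by rewrite a1E a2E; field; rewrite gt_eqF.
  by rewrite ler_pdivlMr // mulrC.
have rSb : rS <= a1 * W + a2 * (N1T + P).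
  have -> : a1 * W + a2 * (N1T + P) = (se * W + mu * sk * (N1T + P)) / d.
    by rewrite a1E a2E; field; rewrite gt_eqF.
  rewrite ler_pdivlMr // mulrC; apply: le_trans LSS _.
  rewrite lerD2l; apply: ler_wpM2l => //; rewrite mulr_ge0 // ltW //.
have Hsum : norm2 (xs - x) <= (2 + sk * a2) * a1 * W + (1 + sk * a2) ^+ 2 * P / sk.
  have e1 : (1 + sk * a2) ^+ 2 * P / sk = P / sk + 2 * a2 * P + a2 * (sk * a2 * P).
    by field; rewrite gt_eqF.
  rewrite e1.
  have := ler_wpM2l a20 N1T_le.
  lra.
have fkE : fk k a2 = sk ^+ 2 * a2 ^+ 2 + 3 * sk * a2 + 3 by rewrite /fk -/sk skk.
have gkE : gk k a2 = 2 * sk ^+ 2 * a2 ^+ 2 + 4 * sk * a2 + 1 by rewrite /gk -/sk skk.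
rewrite fkE gkE.
set sg' := norm1 (x - xk) in sg_le *.
have sg'0 : 0 <= sg' by apply: le_trans sg_le.
apply: le_trans Hsum _.
apply: le_trans (@final_alg R sk a1 a2 lam eps sg' sk0 a10 a20 u1 lam0 eps0 sg'0).
set c := sk * a1 * lam + eps in c0 Wb Pb *.
have u0 : 0 <= sk * a2 by rewrite mulr_ge0 // ltW.
have u2 : 0 < 1 - sk * a2 by lra.
apply: lerD.
  apply: ler_wpM2l; first by rewrite mulr_ge0 // ?ltW //; lra.
  apply: le_trans Wb _; rewrite lerD2r.
  by apply: ler_wpM2r; [rewrite invr_ge0 ltW | apply: ler_wpM2l => //; rewrite mulr_ge0 // ltW].
apply: ler_wpM2r; first by rewrite invr_ge0 ltW.
apply: ler_wpM2l; first exact: sqr_ge0.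
apply: le_trans Pb _.
apply: ler_wpM2r; first by rewrite invr_ge0 ltW // !mulr_gt0.
rewrite lerD2r; apply: ler_wpM2l => //; rewrite mulr_ge0 // ltW.
all: done.
Qed.
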